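(* Let $(\mathfrak J,B,\omega)$ be a symplectic pseudo-euclidean Jordan algebra over an algebraically closed field $\mathbb K$ (of characteristic zero). Then there exist two subalgebras $\mathcal U$ and $\mathcal V$ of $\mathfrak J$ such that $(\mathfrak J=\mathcal U\oplus\mathcal V,B,\omega)$ is a symplectic Jordan-Manin algebra.
   Context: All algebras are finite-dimensional. A Jordan algebra is a commutative algebra with $x(yx^2)=(xy)x^2$; $(\mathfrak J,B)$ is pseudo-euclidean if $B$ is nondegenerate symmetric with $B(xy,z)=B(x,yz)$. A symplectic form is a nondegenerate skew-symmetric bilinear $\omega$ with $\omega(xy,z)+\omega(yz,x)+\omega(zx,y)=0$. A Jordan-Manin algebra is a pseudo-euclidean Jordan algebra $(\mathfrak J,B)$ with $\mathfrak J=\mathcal U\oplus\mathcal V$ (vector space direct sum) for two subalgebras $\mathcal U,\mathcal V$ that are totally isotropic for $B$. It is a symplectic Jordan-Manin algebra if moreover it carries a symplectic form $\omega$ with $\omega(\mathcal U,\mathcal U)=\omega(\mathcal V,\mathcal V)=\{0\}$. *)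

(* Defs.v *)
From HB Require Import structures.
From mathcomp Require Import all_boot all_order all_algebra.
Set Implicit Arguments. Unset Strict Implicit. Unset Printing Implicit Defensive.
Import GRing.Theory.
Local Open Scope ring_scope.

Section JordanDefs.
Variables (K : fieldType) (V : vectType K).

Definition bilinear_product (mul : V -> V -> V) : Prop :=
  (forall (a : K) (x y z : V), mul (a *: x + y) z = a *: mul x z + mul y z) /\
  (forall (a : K) (x y z : V), mul x (a *: y + z) = a *: mul x y + mul x z).

Definition bilinear_form (B : V -> V -> K) : Prop :=
  (forall (a : K) (x y z : V), B (a *: x + y) z = a * B x z + B y z) /\
  (forall (a : K) (x y z : V), B x (a *: y + z) = a * B x y + B x z).

Definition jordan_algebra (mul : V -> V -> V) : Prop :=
  [/\ bilinear_product mul,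
      (forall x y, mul x y = mul y x) &
      (forall x y, mul x (mul y (mul x x)) = mul (mul x y) (mul x x))].

Definition nondegenerate (B : V -> V -> K) : Prop :=
  forall x, (forall y, B x y = 0) -> x = 0.

Definition pseudo_euclidean (mul : V -> V -> V) (B : V -> V -> K) : Prop :=
  [/\ bilinear_form B, (forall x y, B x y = B y x), nondegenerate B &
      (forall x y z, B (mul x y) z = B x (mul y z))].

Definition symplectic_form (mul : V -> V -> V) (w : V -> V -> K) : Prop :=
  [/\ bilinear_form w, (forall x y, w x y = - w y x), nondegenerate w &
      (forall x y z, w (mul x y) z + w (mul y z) x + w (mul z x) y = 0)].

Definition subalgebra (mul : V -> V -> V) (U : {vspace V}) : Prop :=
  forall x y, x \in U -> y \in U -> mul x y \in U.

Definition totally_isotropic (B : V -> V -> K) (U : {vspace V}) : Prop :=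
  forall x y, x \in U -> y \in U -> B x y = 0.

Definition vs_direct_sum (U W : {vspace V}) : Prop :=
  (U + W = fullv)%VS /\ (U :&: W = 0)%VS.

Definition jordan_manin (mul : V -> V -> V) (B : V -> V -> K)
  (U W : {vspace V}) : Prop :=
  [/\ jordan_algebra mul, pseudo_euclidean mul B, vs_direct_sum U W,
      subalgebra mul U /\ subalgebra mul W &
      totally_isotropic B U /\ totally_isotropic B W].

Definition symplectic_jordan_manin (mul : V -> V -> V) (B w : V -> V -> K)
  (U W : {vspace V}) : Prop :=
  [/\ jordan_manin mul B U W, symplectic_form mul w,
      totally_isotropic w U & totally_isotropic w W].

End JordanDefs.

(* Main.v *)
Require Import Defs.
From HB Require Import structures.
From mathcomp Require Import all_boot all_order all_algebra ring.
From Stdlib Require Import Classical.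
Set Implicit Arguments. Unset Strict Implicit. Unset Printing Implicit Defensive.
Import Order.TTheory GRing.Theory Num.Theory.
Local Open Scope ring_scope.

Section RatrChar0.
Variable K : fieldType.
Hypothesis Hchar : [pchar K] =i pred0.

Lemma intrK0 (z : int) : (z%:~R == 0 :> K) = (z == 0).
Proof.
case: z => [k|k].
  change ((k%:R == 0 :> K) = (Posz k == 0)).
  by rewrite (pcharf0P K).1 //.
rewrite NegzE mulrNz oppr_eq0.
change (((k.+1)%:R == 0 :> K) = false).
by rewrite (pcharf0P K).1.
Qed.

Lemma ratr_key (a : rat) (w z : int) : w != 0 -> a * w%:~R = z%:~R ->
  ratr a * w%:~R = z%:~R :> K.
Proof.
move=> w0 E.
have Ea := numqE a.
have H : numq a * w = z * denq a.
  apply: (@intr_inj rat); rewrite !intrM Ea -E; ring.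
rewrite /ratr.
have d0 : (denq a)%:~R != 0 :> K by rewrite intrK0 denq_neq0.
apply: (mulIf d0); rewrite -!intrM -H intrM; field.
by [].

Qed.

Lemma ratr_den (a : rat) : ratr a * (denq a)%:~R = (numq a)%:~R :> K.
Proof. by apply: ratr_key; rewrite ?denq_neq0 // numqE. Qed.

Lemma den_nz (a : rat) : (denq a)%:~R != 0 :> K.
Proof. by rewrite intrK0 denq_neq0. Qed.

Lemma ratrD0 (a b : rat) : ratr (a + b) = ratr a + ratr b :> K.
Proof.
have E : (a + b) * (denq a * denq b)%:~R = (numq a * denq b + numq b * denq a)%:~R.
  rewrite intrD !intrM !numqE; ring.
have := @ratr_key (a + b) _ _ _ E; rewrite mulf_neq0 ?denq_neq0 // => /(_ isT) H.
apply: (mulIf (_ : (denq a * denq b)%:~R != 0 :> K)).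
  by rewrite intrK0 mulf_neq0 ?denq_neq0.
rewrite H intrD !intrM mulrDl.
rewrite -(ratr_den a) -(ratr_den b); ring.
Qed.

Lemma ratrM0 (a b : rat) : ratr (a * b) = ratr a * ratr b :> K.
Proof.
have E : (a * b) * (denq a * denq b)%:~R = (numq a * numq b)%:~R.
  rewrite !intrM !numqE; ring.
have := @ratr_key (a * b) _ _ _ E; rewrite mulf_neq0 ?denq_neq0 // => /(_ isT) H.
apply: (mulIf (_ : (denq a * denq b)%:~R != 0 :> K)).
  by rewrite intrK0 mulf_neq0 ?denq_neq0.
rewrite H !intrM.
rewrite -(ratr_den a) -(ratr_den b); ring.
Qed.

Lemma ratr00 : ratr 0 = 0 :> K.
Proof. by rewrite /ratr mul0r. Qed.

Lemma ratr10 : ratr 1 = 1 :> K.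
Proof. by rewrite /ratr divr1. Qed.
End RatrChar0.

Section Lex.
Variable m : nat.
Implicit Types u v : 'rV[rat]_m.
Definition lexpos (v : 'rV[rat]_m) : bool :=
  [exists i : 'I_m, [forall j : 'I_m, (j < i)%N ==> (v 0 j == 0)] && (0 < v 0 i)].

Lemma lexposP v : reflect (exists i : 'I_m, (forall j : 'I_m, (j < i)%N -> v 0 j = 0) /\ 0 < v 0 i) (lexpos v).
Proof.
apply: (iffP existsP) => [[i /andP[/forallP H1 H2]]|[i [H1 H2]]]; exists i.
  by split=> // j ji; apply/eqP; exact: (implyP (H1 j) ji).
by rewrite H2 andbT; apply/forallP => j; apply/implyP => ji; rewrite H1.
Qed.

Lemma lexposD u v : lexpos u -> lexpos v -> lexpos (u + v).
Proof.
move=> /lexposP[i [Hi1 Hi2]] /lexposP[k [Hk1 Hk2]]; apply/lexposP.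
have [ik|ki] := leqP i k.
  exists i; split.
    by move=> j ji; rewrite mxE Hi1 // Hk1 ?addr0 //; apply: leq_trans ji ik.
  have Hv : 0 <= v 0 i.
    move: ik; rewrite leq_eqVlt => /orP[/eqP ik|ik].
      by rewrite (val_inj ik : i = k) ltW.
    by rewrite Hk1.
  by rewrite mxE; apply: (lt_le_trans Hi2); rewrite lerDl.
exists k; split.
  by move=> j jk; rewrite mxE Hi1 ?Hk1 ?addr0 //; apply: ltn_trans jk ki.
by rewrite mxE Hi1 // add0r.
Qed.

Lemma lexpos_opp v : lexpos v -> lexpos (- v) -> False.
Proof.
move=> /lexposP[i [Hi1 Hi2]] /lexposP[k [Hk1 Hk2]].
have [ik|ki|ik] := ltngtP i k.
- by move: (Hk1 i ik); rewrite mxE => /eqP; rewrite oppr_eq0 => /eqP E; rewrite E ltxx in Hi2.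
- by move: (Hi1 k ki) Hk2 => E; rewrite mxE E oppr0 ltxx.
- have E : i = k by apply: val_inj.
  subst k; move: Hk2; rewrite mxE oppr_gt0 => H; by move: (lt_trans H Hi2); rewrite ltxx.
Qed.

Lemma lexpos_tri v : v != 0 -> lexpos v || lexpos (- v).
Proof.
move=> v0.
have [j0 Hj0] : exists j0 : 'I_m, v 0 j0 != 0.
  apply/existsP; apply: contraNT v0 => /existsPn H; apply/eqP/rowP => j.
  by move: (H j); rewrite negbK mxE => /eqP.
case: (@arg_minnP _ j0 (fun j : 'I_m => v 0 j != 0) (fun j : 'I_m => nat_of_ord j) Hj0) => i Hi Hmin.
have Hz : forall j : 'I_m, (j < i)%N -> v 0 j = 0.
  move=> j ji; apply/eqP; apply: contraTT ji => Hj; rewrite -leqNgt; exact: Hmin.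
have [lt0|gt0] : (v 0 i < 0) \/ (0 < v 0 i).
  by move: Hi; rewrite neq_lt => /orP[a|a]; [left|right].
  apply/orP; right; apply/lexposP; exists i; split.
    by move=> j ji; rewrite mxE Hz ?oppr0.
  by rewrite mxE oppr_gt0.
apply/orP; left; apply/lexposP; exists i; split => //.
Qed.
End Lex.


Section RelSpace.
Variable K : fieldType.
Hypothesis Hchar : [pchar K] =i pred0.
Variable m : nat.
Variable S : 'I_m -> K.

Definition Rel (c : 'rV[rat]_m) : K := \sum_(i < m) ratr (c 0 i) * S i.

Lemma Rel_lin a c d : Rel (a *: c + d) = ratr a * Rel c + Rel d.
Proof.
rewrite /Rel mulr_sumr -big_split; apply: eq_bigr => i _.
by rewrite !mxE ratrD0 // ratrM0 // mulrDl mulrA.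
Qed.

Lemma Rel0 : Rel 0 = 0.
Proof. by rewrite /Rel big1 // => i _; rewrite mxE ratr00 // mul0r. Qed.

Lemma RelD c d : Rel (c + d) = Rel c + Rel d.
Proof. by rewrite -[c]scale1r Rel_lin ratr10 // mul1r scale1r. Qed.

Lemma RelZ a c : Rel (a *: c) = ratr a * Rel c.
Proof. by rewrite -[a *: c]addr0 Rel_lin Rel0 addr0. Qed.

Lemma RelN c : Rel (- c) = - Rel c.
Proof.
have E : ratr (-1) = -1 :> K.
  by apply: (addrI (ratr 1)); rewrite -ratrD0 // subrr ratr00 // ratr10 // subrr.
by rewrite -scaleN1r RelZ E mulN1r.
Qed.

Definition goodM (M : 'M[rat]_m) := forall c : 'rV_m, (c <= M)%MS -> Rel c = 0.

Lemma exM : exists M : 'M[rat]_m, forall c, (c <= M)%MS <-> Rel c = 0.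
Proof.
have step : forall k, exists M : 'M[rat]_m, goodM M /\
    ((k <= \rank M)%N \/ forall c, Rel c = 0 -> (c <= M)%MS).
  elim=> [|k [M [gM [rk|all]]]].
  - exists 0; split; last by left.
    by move=> c; rewrite submx0 => /eqP ->; exact: Rel0.
  - case: (classic (forall c, Rel c = 0 -> (c <= M)%MS)) => [all|].
      by exists M; split => //; right.
    move=> /not_all_ex_not [c Hc]; have [Rc nc] := imply_to_and _ _ Hc.
    exists (M + c)%MS; split.
      move=> d /sub_addsmxP [[u1 u2] /= ->].
      rewrite RelD gM ?submxMl // add0r.
      by rewrite (mx11_scalar u2) mul_scalar_mx RelZ Rc mulr0.
    left; apply: leq_ltn_trans rk _; apply: rank_ltmx.
    rewrite ltmxE addsmxSl /=; apply: contra_notN nc => H.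
    exact: submx_trans (addsmxSr M c) H.
  - by exists M; split => //; right.
have [M [gM [rk|all]]] := step m.+1.
  by move: (rank_leq_col M); rewrite leqNgt rk.
exists M => c; split; [exact: gM | exact: all].
Qed.
End RelSpace.

Section PosSel.
Variable K : fieldType.
Hypothesis Hchar : [pchar K] =i pred0.

Lemma exists_pos (S : seq K) : 0 \notin S -> exists pos : pred K,
 [/\ (forall a b, a \in S -> b \in S -> pos a -> pos b -> a + b != 0),
     (forall a b, a \in S -> b \in S -> ~~ pos a -> ~~ pos b -> a + b != 0),
     (forall a b, a \in S -> b \in S -> a + b \in S -> pos a -> pos b -> pos (a+b)) &
     (forall a b, a \in S -> b \in S -> a + b \in S -> ~~ pos a -> ~~ pos b -> ~~ pos (a+b))].
Proof.
move=> S0.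
pose m := size S.
pose Sf := fun i : 'I_m => nth 0 S i.
have [M HM] := exM Hchar Sf.
pose e := fun a : K => \row_(i < m) (if (i == index a S :> nat) then 1 else 0 : rat).
have Re : forall a, a \in S -> Rel Sf (e a) = a.
  move=> a aS; have im : (index a S < m)%N by rewrite index_mem.
  rewrite /Rel (bigD1 (Ordinal im)) //= big1 ?addr0.
    by rewrite mxE eqxx ratr10 // mul1r /Sf nth_index.
  move=> i /negbTE ni; rewrite mxE.
  have -> : (i == index a S :> nat) = false.
    by apply/negbTE; apply: contraFN ni => /eqP E; apply/eqP/val_inj.
  by rewrite ratr00 // mul0r.
pose kap := fun v : 'rV[rat]_m => v *m cokermx M.
have kap0 : forall v, (kap v == 0) = (Rel Sf v == 0).
  move=> v; rewrite /kap -submxE; apply/idP/idP => [/HM ->//|/eqP /HM//].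
have kapnz : forall a, a \in S -> kap (e a) != 0.
  by move=> a aS; rewrite kap0 Re //; apply: contraNneq S0 => <-.
have kapD : forall a b, a \in S -> b \in S -> a + b \in S -> kap (e (a+b)) = kap (e a) + kap (e b).
  move=> a b aS bS abS; apply/eqP; rewrite eq_sym -subr_eq0.
  have -> : kap (e a) + kap (e b) - kap (e (a + b)) = kap (e a + e b - e (a + b)).
    by rewrite /kap !mulmxDl mulNmx.
  by rewrite kap0 RelD // RelN // RelD // !Re // subrr.
have kapO : forall a b, a \in S -> b \in S -> a + b = 0 -> kap (e b) = - kap (e a).
  move=> a b aS bS ab; apply/eqP; rewrite -addr_eq0 addrC.
  have -> : kap (e a) + kap (e b) = kap (e a + e b) by rewrite /kap mulmxDl.
  by rewrite kap0 RelD // !Re // ab.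
have negQ : forall a, a \in S -> ~~ lexpos (kap (e a)) -> lexpos (- kap (e a)).
  by move=> a aS; have := lexpos_tri (kapnz a aS); case: (lexpos _).
exists (fun a => lexpos (kap (e a))); split.
- move=> a b aS bS pa pb; apply/negP => /eqP ab.
  by move: pb; rewrite (kapO a b aS bS ab) => pb; apply: lexpos_opp pa pb.
- move=> a b aS bS pa pb; apply/negP => /eqP ab.
  move: (negQ b bS pb); rewrite (kapO a b aS bS ab) opprK => pb'.
  exact: lexpos_opp pb' (negQ a aS pa).
- by move=> a b aS bS abS /= pa pb; rewrite kapD //; apply: lexposD.
- move=> a b aS bS abS /= pa pb; apply/negP => pab.
  have := lexposD (negQ a aS pa) (negQ b bS pb).
  rewrite -opprD -kapD // => H; exact: lexpos_opp pab H.
Qed.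
End PosSel.

Section Core.
Variable K : closedFieldType.
Hypothesis Hchar : [pchar K] =i pred0.
Variable n : nat.
Local Notation rv := 'rV[K]_n.+1.
Variables (mulR : rv -> rv -> rv) (BR wR : rv -> rv -> K).
Implicit Types x y z u v : rv.
Hypothesis HmL : forall a x y z, mulR (a *: x + y) z = a *: mulR x z + mulR y z.
Hypothesis HmC : forall x y, mulR x y = mulR y x.
Hypothesis HBL : forall a x y z, BR (a *: x + y) z = a * BR x z + BR y z.
Hypothesis HBS : forall x y, BR x y = BR y x.
Hypothesis HBN : forall x, (forall y, BR x y = 0) -> x = 0.
Hypothesis HBI : forall x y z, BR (mulR x y) z = BR x (mulR y z).
Hypothesis HwL : forall a x y z, wR (a *: x + y) z = a * wR x z + wR y z.
Hypothesis HwS : forall x y, wR x y = - wR y x.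
Hypothesis HwN : forall x, (forall y, wR x y = 0) -> x = 0.
Hypothesis HwC : forall x y z, wR (mulR x y) z + wR (mulR y z) x + wR (mulR z x) y = 0.

Section FormLin.
Variable f : rv -> K.
Hypothesis fL : forall a x y, f (a *: x + y) = a * f x + f y.
Lemma fl0 : f 0 = 0.
Proof. have := fL 1 0 0; rewrite scaler0 addr0 mul1r => E. by apply: (addrI (f 0)); rewrite addr0 -E. Qed.
Lemma flD x y : f (x + y) = f x + f y.
Proof. by rewrite -[x]scale1r fL mul1r scale1r. Qed.
Lemma flZ a x : f (a *: x) = a * f x.
Proof. by rewrite -[a *: x]addr0 fL fl0 addr0. Qed.
Lemma flN x : f (- x) = - f x.
Proof. by rewrite -scaleN1r flZ mulN1r. Qed.
Lemma flB x y : f (x - y) = f x - f y.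
Proof. by rewrite flD flN. Qed.
Lemma fl_sum I r (P : pred I) (F : I -> rv) : f (\sum_(i <- r | P i) F i) = \sum_(i <- r | P i) f (F i).
Proof. exact: (big_morph f flD fl0). Qed.
Lemma fl_expand u : f u = \sum_j u 0 j * f (delta_mx 0 j).
Proof. by rewrite {1}(row_sum_delta u) fl_sum; apply: eq_bigr => j _; rewrite flZ. Qed.
End FormLin.

Lemma BRlin1 y : forall a x z, BR (a *: x + z) y = a * BR x y + BR z y.
Proof. by move=> *; rewrite HBL. Qed.
Lemma BRlin2 x : forall a y z, BR x (a *: y + z) = a * BR x y + BR x z.
Proof. by move=> a y z; rewrite !(HBS x) HBL. Qed.
Lemma wRlin1 y : forall a x z, wR (a *: x + z) y = a * wR x y + wR z y.
Proof. by move=> *; rewrite HwL. Qed.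
Lemma wRlin2 x : forall a y z, wR x (a *: y + z) = a * wR x y + wR x z.
Proof. by move=> a y z; rewrite !(HwS x) HwL mulrN opprD. Qed.

Definition GB : 'M[K]_n.+1 := \matrix_(i, j) BR (delta_mx 0 i) (delta_mx 0 j).
Definition GW : 'M[K]_n.+1 := \matrix_(i, j) wR (delta_mx 0 i) (delta_mx 0 j).

Lemma BR_gram u v : BR u v = \sum_j (u *m GB) 0 j * v 0 j.
Proof.
rewrite (fl_expand (BRlin2 u)); apply: eq_bigr => j _; rewrite mulrC; congr (_ * _).
rewrite (fl_expand (BRlin1 (delta_mx 0 j))) !mxE; apply: eq_bigr => i _.
by rewrite mxE.
Qed.

Lemma wR_gram u v : wR u v = \sum_j (u *m GW) 0 j * v 0 j.
Proof.
rewrite (fl_expand (wRlin2 u)); apply: eq_bigr => j _; rewrite mulrC; congr (_ * _).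
rewrite (fl_expand (wRlin1 (delta_mx 0 j))) !mxE; apply: eq_bigr => i _.
by rewrite mxE.
Qed.

Lemma GB_unit : GB \in unitmx.
Proof.
rewrite -row_free_unit -kermx_eq0; apply/rowV0P => v /sub_kermxP H.
apply: HBN => y; rewrite BR_gram H big1 // => j _; by rewrite mxE mul0r.
Qed.

Fact D_key : unit. Proof. exact: tt. Qed.
Definition D := locked_with D_key (GW *m invmx GB).

Lemma BR_D u v : BR (u *m D) v = wR u v.
Proof. rewrite /D [locked_with _ _]unlock BR_gram wR_gram. by rewrite -!mulmxA mulVmx ?GB_unit // mulmx1. Qed.


Lemma mulRlin1 y : forall a x z, mulR (a *: x + z) y = a *: mulR x y + mulR z y.
Proof. by move=> *; rewrite HmL. Qed.
Lemma mul0R y : mulR 0 y = 0.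
Proof. have := HmL 1 0 0 y. rewrite scaler0 addr0 scale1r. move=> E. by apply/eqP; rewrite -{2}(subrr (mulR 0 y)) {2}E addrK. Qed.
Lemma mulDR x z y : mulR (x + z) y = mulR x y + mulR z y.
Proof. by rewrite -[x]scale1r HmL !scale1r. Qed.
Lemma mulZR a x y : mulR (a *: x) y = a *: mulR x y.
Proof. by rewrite -[a *: x]addr0 HmL mul0R addr0. Qed.
Lemma mulNR x y : mulR (- x) y = - mulR x y.
Proof. by rewrite -scaleN1r mulZR scaleN1r. Qed.
Lemma mulBR x z y : mulR (x - z) y = mulR x y - mulR z y.
Proof. by rewrite mulDR mulNR. Qed.
Lemma mulR0 y : mulR y 0 = 0. Proof. by rewrite HmC mul0R. Qed.
Lemma mulRD y x z : mulR y (x + z) = mulR y x + mulR y z.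
Proof. by rewrite !(HmC y) mulDR. Qed.
Lemma mulRZ a y x : mulR y (a *: x) = a *: mulR y x.
Proof. by rewrite !(HmC y) mulZR. Qed.
Lemma mulRB y x z : mulR y (x - z) = mulR y x - mulR y z.
Proof. by rewrite !(HmC y) mulBR. Qed.
Lemma mul_sumR I r (P : pred I) (F : I -> rv) y :
  mulR (\sum_(i <- r | P i) F i) y = \sum_(i <- r | P i) mulR (F i) y.
Proof. exact: (big_morph (fun x => mulR x y) (fun a b => mulDR a b y) (mul0R y)). Qed.
Lemma mulR_sum I r (P : pred I) (F : I -> rv) y :
  mulR y (\sum_(i <- r | P i) F i) = \sum_(i <- r | P i) mulR y (F i).
Proof. rewrite HmC mul_sumR; apply: eq_bigr => i _; exact: HmC. Qed.

Lemma BR0l y : BR 0 y = 0. Proof. exact: (fl0 (@BRlin1 y)). Qed.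
Lemma BR0r y : BR y 0 = 0. Proof. exact: (fl0 (@BRlin2 y)). Qed.
Lemma BRDl x z y : BR (x + z) y = BR x y + BR z y. Proof. exact: (flD (@BRlin1 y)). Qed.
Lemma BRDr y x z : BR y (x + z) = BR y x + BR y z. Proof. exact: (flD (@BRlin2 y)). Qed.
Lemma BRZl a x y : BR (a *: x) y = a * BR x y. Proof. exact: (flZ (@BRlin1 y)). Qed.
Lemma BRZr a y x : BR y (a *: x) = a * BR y x. Proof. exact: (flZ (@BRlin2 y)). Qed.
Lemma BRNl x y : BR (- x) y = - BR x y. Proof. exact: (flN (@BRlin1 y)). Qed.
Lemma BRNr y x : BR y (- x) = - BR y x. Proof. exact: (flN (@BRlin2 y)). Qed.

Lemma D_der u v : mulR u v *m D = mulR (u *m D) v + mulR u (v *m D).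
Proof.
apply/eqP; rewrite -subr_eq0; apply/eqP; apply: HBN => z.
rewrite BRDl BRNl BRDl BR_D HBI BR_D (HmC u (v *m D)) HBI BR_D.
rewrite (HwS u) (HwS v) (HmC u z).
have := HwC u v z; move=> E.
rewrite -[X in _ = X]E; ring.
Qed.

Lemma D_skew u v : BR (u *m D) v = - BR u (v *m D).
Proof. by rewrite BR_D HwS -BR_D HBS. Qed.

Lemma D_unit : D \in unitmx.
Proof.
rewrite -row_free_unit -kermx_eq0; apply/rowV0P => v /sub_kermxP H.
by apply: HwN => y; rewrite -BR_D H BR0l.
Qed.


Local Notation hD := (horner_mx D).

Lemma hD_commD p : D *m hD p = hD p *m D.
Proof. exact: comm_mx_horner. Qed.

Lemma hD_comm p q : hD p *m hD q = hD q *m hD p.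
Proof. by rewrite mulmxE -!rmorphM mulrC. Qed.

Lemma hD_X : hD 'X = D. Proof. exact: horner_mx_X. Qed.

Lemma skew_poly q : forall x z, BR x (z *m hD q) = BR (x *m hD (q \Po - 'X)) z.
Proof.
elim/poly_ind: q => [|q c IH] x z.
  by rewrite rmorph0 comp_poly0 rmorph0 !mulmx0 BR0r BR0l.
rewrite rmorphD rmorphM /= horner_mx_X horner_mx_C comp_polyD comp_polyM comp_polyC comp_polyX.
rewrite rmorphD rmorphM /= rmorphN /= horner_mx_X horner_mx_C.
rewrite !mulmxDr !mulmxA !mul_mx_scalar BRDr BRZr BRDl BRZl.
rewrite (HBS x) D_skew (HBS _ (x *m D)) IH.
by rewrite -mulmxA hD_commD mulmxA mulmxN BRNl.
Qed.

Lemma ker_sub p q h x : coprimep q h -> hD (p * h) = 0 -> x *m hD q = 0 -> x *m hD p = 0.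
Proof.
move=> /Bezout_eq1_coprimepP [[u v] /= E] Hph Hq.
have : x *m hD (u * q + v * h) = x by rewrite E rmorph1 mulmx1.
rewrite rmorphD mulmxDr rmorphM /= -mulmxE hD_comm mulmxA Hq mul0mx add0r => Ex.
rewrite -Ex -mulmxA mulmxE -rmorphM -mulrA (mulrC h) rmorphM /= Hph mulr0 mulmx0 //.
Qed.

Lemma iso_poly p q x y : coprimep q (p \Po - 'X) -> x *m hD p = 0 -> y *m hD q = 0 -> BR x y = 0.
Proof.
move=> /Bezout_eq1_coprimepP [[u v] /= E] Hp Hq.
have : y *m hD (u * q + v * (p \Po - 'X)) = y by rewrite E rmorph1 mulmx1.
rewrite rmorphD mulmxDr rmorphM /= -mulmxE hD_comm mulmxA Hq mul0mx add0r rmorphM /= mulmxA => Ey.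
rewrite -Ey skew_poly -comp_polyA.
have -> : (- 'X) \Po (- 'X) = 'X :> {poly K}.
  by rewrite -[X in X \Po _]sub0r comp_polyB comp_poly0 comp_polyX sub0r opprK.
by rewrite comp_polyXr Hp BR0l.
Qed.


Lemma leibniz a b x y : mulR x y *m (D - (a + b)%:M) =
  mulR (x *m (D - a%:M)) y + mulR x (y *m (D - b%:M)).
Proof.
rewrite !mulmxBr !mul_mx_scalar D_der mulBR mulRB mulZR mulRZ.
by rewrite scalerDl opprD addrACA.
Qed.

Lemma prod_rule a b k : forall i j x y, (i + j = k)%N ->
  x *m (D - a%:M) ^+ i = 0 -> y *m (D - b%:M) ^+ j = 0 ->
  mulR x y *m (D - (a + b)%:M) ^+ k = 0.
Proof.
elim: k => [|k IH] [|i] [|j] x y //= Eij Hx Hy.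
- by move: Hx; rewrite expr0 mulmx1 => ->; rewrite mul0R mul0mx.
- by move: Hx; rewrite expr0 mulmx1 => ->; rewrite mul0R mul0mx.
- by move: Hy; rewrite expr0 mulmx1 => ->; rewrite mulR0 mul0mx.
- rewrite exprS -mulmxE mulmxA leibniz mulmxDl.
  rewrite (IH i j.+1) ?(IH i.+1 j) ?add0r //.
  + by move: Eij; rewrite addnS => -[].
  + by rewrite -mulmxA mulmxE -exprS.
  + by move: Eij; rewrite addSn => -[].
  + by move: Hx; rewrite exprS -mulmxE mulmxA.
Qed.


Section Halves.
Variable s : seq K.
Hypothesis Hs : char_poly D = \prod_(z <- s) ('X - z%:P).

Definition pQ (Q : pred K) := \prod_(z <- s | Q z) ('X - z%:P).

Lemma root_pQ Q (t : K) : root (pQ Q) t = Q t && (t \in s).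
Proof. by rewrite /pQ -big_filter root_prod_XsubC mem_filter. Qed.

Lemma pQ_split Q : hD (pQ Q * pQ (predC Q)) = 0.
Proof.
have -> : pQ Q * pQ (predC Q) = char_poly D by rewrite Hs (bigID Q) /=.
exact: Cayley_Hamilton.
Qed.

Lemma pQ_cop Q : coprimep (pQ Q) (pQ (predC Q)).
Proof.
apply: Pdiv.ClosedField.root_coprimep => t; rewrite root_pQ => /andP[Qx xs].
by rewrite -rootE root_pQ /= Qx.
Qed.

Variable Q : pred K.
Hypothesis Q0 : forall a b, a \in s -> b \in s -> Q a -> Q b -> a + b != 0.
Hypothesis QD : forall a b, a \in s -> b \in s -> a + b \in s -> Q a -> Q b -> Q (a+b).

Lemma pQ_isoB u v : u *m hD (pQ Q) = 0 -> v *m hD (pQ Q) = 0 -> BR u v = 0.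
Proof.
apply: iso_poly; apply: Pdiv.ClosedField.root_coprimep => t; rewrite root_pQ => /andP[Qx xs].
rewrite horner_comp hornerN hornerX -rootE root_pQ; apply/negP => /andP[Qy ys].
by move: (Q0 xs ys Qx Qy); rewrite subrr eqxx.
Qed.

Lemma pQ_isoW u v : u *m hD (pQ Q) = 0 -> v *m hD (pQ Q) = 0 -> wR u v = 0.
Proof.
move=> Hu Hv; rewrite -BR_D; apply: pQ_isoB Hv.
by rewrite -mulmxA hD_commD mulmxA Hu mul0mx.
Qed.


Lemma hD_lin a k : hD (('X - a%:P) ^+ k) = (D - a%:M) ^+ k.
Proof. by rewrite rmorphXn rmorphB /= horner_mx_X horner_mx_C. Qed.

Lemma iter_exp (p : {poly K}) k : iter k ( *%R p) 1 = p ^+ k.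
Proof. by elim: k => [|k IH] //=; rewrite IH exprS. Qed.

Lemma pQ_mul u v : u *m hD (pQ Q) = 0 -> v *m hD (pQ Q) = 0 -> mulR u v *m hD (pQ Q) = 0.
Proof.
pose S := undup s; pose m := size S.
pose Sf := fun i : 'I_m => nth 0 S i.
pose c := fun i : 'I_m => count_mem (Sf i) s.
pose p_ := fun i : 'I_m => ('X - (Sf i)%:P) ^+ c i.
have SfS : forall i : 'I_m, Sf i \in s by move=> i; rewrite -mem_undup mem_nth.
have E1 : pQ Q = \prod_(i < m | Q (Sf i)) p_ i.
  rewrite /pQ -big_undup_iterop_count (big_nth 0) big_mkord.
  by apply: eq_bigr => i _; rewrite Monoid.iteropE iter_exp.
have cop : {in [pred i | Q (Sf i)] &, forall i j, j != i -> coprimep (p_ i) (p_ j)}.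
  move=> i j _ _ ji; apply: coprimep_expl; apply: coprimep_expr.
  rewrite coprimep_XsubC root_XsubC; apply: contra ji => /eqP E.
  apply/eqP/val_inj/eqP; rewrite -(nth_uniq 0 _ _ (undup_uniq s)) ?ltn_ord //; exact/eqP.
have dec : forall w, w *m hD (pQ Q) = 0 -> exists x_ : 'I_m -> 'rV_n.+1,
    w = \sum_(i | Q (Sf i)) x_ i /\ forall i, x_ i *m (D - (Sf i)%:M) ^+ c i = 0.
  move=> w /sub_kermxP Hw.
  have : (w <= kermxpoly D (\prod_(i < m | Q (Sf i)) p_ i))%MS by rewrite -E1.
  rewrite (kermxpoly_prod D cop) => /sub_sumsmxP [w_ Ew].
  exists (fun i => w_ i *m kermxpoly D (p_ i)); split => // i.
  by rewrite -hD_lin -mulmxA mulmx_ker mulmx0.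
move=> /dec [x_ [-> Hx]] /dec [y_ [-> Hy]].
rewrite mul_sumR mulmx_suml big1 // => i Qi.
rewrite mulR_sum mulmx_suml big1 // => j Qj.
apply: (@ker_sub _ (('X - (Sf i + Sf j)%:P) ^+ (c i + c j)) (pQ (predC Q))).
- apply: coprimep_expl; rewrite coprimep_sym coprimep_XsubC root_pQ /= negb_and negbK.
  case ijs: (Sf i + Sf j \in s); last by rewrite orbT.
  by rewrite QD.
- exact: pQ_split.
- by rewrite hD_lin; apply: (prod_rule (i := c i) (j := c j)).
Qed.

End Halves.


Lemma core_mx : exists MU MW : 'M[K]_n.+1,
  [/\ (MU + MW :=: 1%:M)%MS, (MU :&: MW)%MS = 0,
   (forall u v, (u <= MU)%MS -> (v <= MU)%MS -> [/\ (mulR u v <= MU)%MS, BR u v = 0 & wR u v = 0]) &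
   (forall u v, (u <= MW)%MS -> (v <= MW)%MS -> [/\ (mulR u v <= MW)%MS, BR u v = 0 & wR u v = 0])].
Proof.
have [s Hs] : exists s, char_poly D = \prod_(z <- s) ('X - z%:P).
  have [s Hs] := closed_field_poly_normal (char_poly D).
  by exists s; rewrite Hs (monicP (char_poly_monic D)) scale1r.
have s0 : 0 \notin s.
  apply/negP => zs.
  have : root (char_poly D) 0 by rewrite Hs root_prod_XsubC.
  rewrite -eigenvalue_root_char => /eigenvalueP [v vD v0].
  move: vD; rewrite scale0r => vD.
  have : v = 0 by rewrite -(mulmxK D_unit v) vD mul0mx.
  by move/eqP; rewrite (negbTE v0).
have s0u : 0 \notin undup s by rewrite mem_undup.
have [pos [P1 P2 P3 P4]] := @exists_pos K Hchar (undup s) s0u.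
have Q1 : forall Q : pred K, (forall a b, a \in undup s -> b \in undup s -> Q a -> Q b -> a + b != 0) ->
   forall a b, a \in s -> b \in s -> Q a -> Q b -> a + b != 0.
  by move=> Q H a b; rewrite -!(mem_undup s); apply: H.
have Q2 : forall Q : pred K, (forall a b, a \in undup s -> b \in undup s -> a + b \in undup s -> Q a -> Q b -> Q (a + b)) ->
   forall a b, a \in s -> b \in s -> a + b \in s -> Q a -> Q b -> Q (a + b).
  by move=> Q H a b; rewrite -!(mem_undup s); apply: H.
exists (kermx (hD (pQ s pos))), (kermx (hD (pQ s (predC pos)))); split.
- change ((kermxpoly D (pQ s pos) + kermxpoly D (pQ s (predC pos)) :=: 1%:M)%MS).
  apply: eqmx_trans (eqmx_sym (kermxpolyM D (pQ_cop s pos))) _.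
  change (kermx (hD (pQ s pos * pQ s (predC pos))) :=: 1%:M)%MS.
  rewrite (pQ_split Hs); exact: kermx0.
- exact: (mxdirect_kermxpoly D (pQ_cop s pos)).
- move=> u v /sub_kermxP Hu /sub_kermxP Hv; split.
  + by apply/sub_kermxP; apply: (pQ_mul Hs (Q2 _ P3)).
  + exact: (pQ_isoB (Q1 _ P1) Hu Hv).
  + exact: (pQ_isoW (Q1 _ P1) Hu Hv).
- move=> u v /sub_kermxP Hu /sub_kermxP Hv; split.
  + by apply/sub_kermxP; apply: (pQ_mul Hs (Q2 _ P4)).
  + exact: (pQ_isoB (Q1 _ P2) Hu Hv).
  + exact: (pQ_isoW (Q1 _ P2) Hu Hv).
Qed.

End Core.

Lemma core_any (K : closedFieldType) (Hchar : [pchar K] =i pred0) (n : nat)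
  (mulR : 'rV[K]_n -> 'rV_n -> 'rV_n) (BR wR : 'rV[K]_n -> 'rV_n -> K) :
  (forall a x y z, mulR (a *: x + y) z = a *: mulR x z + mulR y z) ->
  (forall x y, mulR x y = mulR y x) ->
  (forall a x y z, BR (a *: x + y) z = a * BR x z + BR y z) ->
  (forall x y, BR x y = BR y x) ->
  (forall x, (forall y, BR x y = 0) -> x = 0) ->
  (forall x y z, BR (mulR x y) z = BR x (mulR y z)) ->
  (forall a x y z, wR (a *: x + y) z = a * wR x z + wR y z) ->
  (forall x y, wR x y = - wR y x) ->
  (forall x, (forall y, wR x y = 0) -> x = 0) ->
  (forall x y z, wR (mulR x y) z + wR (mulR y z) x + wR (mulR z x) y = 0) ->
  exists MU MW : 'M[K]_n,
  [/\ (MU + MW :=: 1%:M)%MS, (MU :&: MW)%MS = 0,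
   (forall u v, (u <= MU)%MS -> (v <= MU)%MS -> [/\ (mulR u v <= MU)%MS, BR u v = 0 & wR u v = 0]) &
   (forall u v, (u <= MW)%MS -> (v <= MW)%MS -> [/\ (mulR u v <= MW)%MS, BR u v = 0 & wR u v = 0])].
Proof.
case: n mulR BR wR => [|n] mulR BR wR HmL HmC HBL HBS HBN HBI HwL HwS HwN HwC; last first.
  by apply: (core_mx Hchar HmL HmC HBL HBS HBN HBI HwL HwS HwN HwC).
have BR00 : forall u v, BR u v = 0.
  move=> u v; rewrite (thinmx0 u) (thinmx0 v).
  have := HBL 1 0 0 0; rewrite scale1r addr0 mul1r => E.
  by apply/eqP; rewrite -(subrr (BR 0 0)) {2}E addrK.
have wR00 : forall u v, wR u v = 0.
  move=> u v; rewrite (thinmx0 u) (thinmx0 v).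
  have := HwL 1 0 0 0; rewrite scale1r addr0 mul1r => E.
  by apply/eqP; rewrite -(subrr (wR 0 0)) {2}E addrK.
exists 0, 0; split.
- by rewrite !thinmx0.
- by rewrite thinmx0.
- by move=> u v _ _; rewrite BR00 wR00 (thinmx0 (mulR u v)) sub0mx.
- by move=> u v _ _; rewrite BR00 wR00 (thinmx0 (mulR u v)) sub0mx.
Qed.

Import VectorInternalTheory.

Lemma mem_mx2vs (K : fieldType) (V : vectType K) (M : 'M[K]_(dim V)) (x : V) :
  (x \in mx2vs M) = (v2r x <= M)%MS.
Proof. by rewrite [x \in _]unfold_in /= /vline /= !genmxE. Qed.

Unset Implicit Arguments.

Theorem mainTheorem11 (K : closedFieldType) (V : vectType K)
  (mul : V -> V -> V) (B w : V -> V -> K) :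
  [pchar K] =i pred0 ->
  jordan_algebra mul ->
  pseudo_euclidean mul B ->
  symplectic_form mul w ->
  exists U W : {vspace V}, symplectic_jordan_manin mul B w U W.
Proof.
move=> Hchar Hjor Hpe Hsy.
case: (Hjor) => [[Hm1 Hm2] HC HJ].
case: (Hpe) => [[BL1 BL2] BS BN BI].
case: (Hsy) => [[wL1 wL2] wS wN wC].
pose mulR u v := v2r (mul (r2v u) (r2v v)).
pose BR u v := B (r2v u) (r2v v).
pose wR u v := w (r2v u) (r2v v).
have [MU [MW [H1 H2 HU HW]]] : exists MU MW : 'M[K]_(dim V),
  [/\ (MU + MW :=: 1%:M)%MS, (MU :&: MW)%MS = 0,
   (forall u v, (u <= MU)%MS -> (v <= MU)%MS -> [/\ (mulR u v <= MU)%MS, BR u v = 0 & wR u v = 0]) &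
   (forall u v, (u <= MW)%MS -> (v <= MW)%MS -> [/\ (mulR u v <= MW)%MS, BR u v = 0 & wR u v = 0])].
  apply: core_any => //.
  - by move=> a x y z; rewrite /mulR linearP Hm1 linearP.
  - by move=> x y; rewrite /mulR HC.
  - by move=> a x y z; rewrite /BR linearP BL1.
  - by move=> x y; rewrite /BR BS.
  - move=> x Hx; apply: r2v_inj; rewrite linear0; apply: BN => y.
    by rewrite -(v2rK y); apply: Hx.
  - by move=> x y z; rewrite /BR /mulR !v2rK BI.
  - by move=> a x y z; rewrite /wR linearP wL1.
  - by move=> x y; rewrite /wR wS.
  - move=> x Hx; apply: r2v_inj; rewrite linear0; apply: wN => y.
    by rewrite -(v2rK y); apply: Hx.
  - by move=> x y z; rewrite /wR /mulR !v2rK wC.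
exists (mx2vs MU), (mx2vs MW).
have cl : forall M : 'M_(dim V),
   (forall u v, (u <= M)%MS -> (v <= M)%MS -> [/\ (mulR u v <= M)%MS, BR u v = 0 & wR u v = 0]) ->
   [/\ subalgebra mul (mx2vs M), totally_isotropic B (mx2vs M) & totally_isotropic w (mx2vs M)].
  move=> M HM; split => x y; rewrite !mem_mx2vs => Hx Hy; have [h1 h2 h3] := HM _ _ Hx Hy.
  - by move: h1; rewrite /mulR !v2rK.
  - by move: h2; rewrite /BR !v2rK.
  - by move: h3; rewrite /wR !v2rK.
have [cU1 cU2 cU3] := cl _ HU.
have [cW1 cW2 cW3] := cl _ HW.
split => //; split => //; split.
- apply/vspaceP => x; rewrite memvf.
  have : (v2r x <= MU + MW)%MS by rewrite H1 submx1.
  move=> /sub_addsmxP [[a b] /= Ex].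
  have Ex2 : x = r2v (a *m MU) + r2v (b *m MW).
    by apply: (@v2r_inj _ V); rewrite linearD /= !r2vK -Ex.
  rewrite Ex2.
  by apply: memv_add; rewrite mem_mx2vs r2vK submxMl.
- apply/vspaceP => x; rewrite memv_cap memv0 !mem_mx2vs.
  apply/idP/idP.
  + move=> /andP [h1 h2]; have : (v2r x <= MU :&: MW)%MS by rewrite sub_capmx h1.
    rewrite H2 submx0 => /eqP Hx; apply/eqP; apply: (@v2r_inj _ V); by rewrite Hx linear0.
  + by move=> /eqP ->; rewrite linear0 !sub0mx.
Qed.
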